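(* Let $(A,\cdot)$ be a commutative associative algebra and $(P,Q)$ an admissible pair on it. Then $Q(x)\cdot y-x\cdot Q(y)=P(x)\cdot y-x\cdot P(y)$ for all $x,y\in A$, and the bracket $[x,y]=Q(x)\cdot y-x\cdot Q(y)$ makes $(A,[-,-])$ a Lie algebra. Moreover, if $\mathcal B$ is a symmetric bilinear form on $A$ which is invariant on $(A,\cdot)$, i.e. $\mathcal B(x\cdot y,z)=\mathcal B(x,y\cdot z)$ for all $x,y,z$, then $\mathcal B$ is a commutative 2-cocycle on $(A,[-,-])$.
   Context: All vector spaces are finite-dimensional over a field $\mathbb F$ of characteristic $0$. An admissible pair on a commutative associative algebra $(A,\cdot)$ is a pair of linear maps $P,Q:A\to A$ with $Q(x\cdot y)=Q(x)\cdot y+x\cdot P(y)$ for all $x,y\in A$. A commutative 2-cocycle on a Lie algebra is a symmetric bilinear form $\mathcal B$ with $\mathcal B([x,y],z)+\mathcal B([y,z],x)+\mathcal B([z,x],y)=0$. *)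

(* Defs.v *)
From HB Require Import structures.
From mathcomp Require Import all_boot all_order all_algebra.
Set Implicit Arguments. Unset Strict Implicit. Unset Printing Implicit Defensive.
Import GRing.Theory.
Local Open Scope ring_scope.

Definition bilinear_map (F : fieldType) (V W : lmodType F) (m : V -> V -> W) :=
  (forall (a : F) (x y z : V), m (a *: x + y) z = a *: m x z + m y z) /\
  (forall (a : F) (x y z : V), m x (a *: y + z) = a *: m x y + m x z).

Definition comm_assoc_algebra (F : fieldType) (V : lmodType F) (mul : V -> V -> V) :=
  [/\ bilinear_map mul,
      (forall x y, mul x y = mul y x) &
      (forall x y z, mul (mul x y) z = mul x (mul y z))].

Definition admissible_pair (F : fieldType) (V : lmodType F) (mul : V -> V -> V)
  (P Q : V -> V) := forall x y, Q (mul x y) = mul (Q x) y + mul x (P y).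

Definition lie_bracket (F : fieldType) (V : lmodType F) (br : V -> V -> V) :=
  [/\ bilinear_map br,
      (forall x, br x x = 0) &
      (forall x y z, br (br x y) z + br (br y z) x + br (br z x) y = 0)].

Definition sym_bilin_form (F : fieldType) (V : lmodType F) (B : V -> V -> F^o) :=
  bilinear_map B /\ forall x y, B x y = B y x.

Definition mul_invariant_form (F : fieldType) (V : lmodType F) (mul : V -> V -> V)
  (B : V -> V -> F^o) := forall x y z, B (mul x y) z = B x (mul y z).

Definition comm_2cocycle (F : fieldType) (V : lmodType F) (br : V -> V -> V)
  (B : V -> V -> F^o) :=
  sym_bilin_form B /\
  forall x y z, B (br x y) z + B (br y z) x + B (br z x) y = 0.

(* Main.v *)
Require Import Defs.
From HB Require Import structures.
From mathcomp Require Import all_boot all_order all_algebra.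
Import GRing.Theory.
Local Open Scope ring_scope.

Section Helpers.
Variables (F : fieldType) (V W : lmodType F) (m : V -> V -> W).
Hypothesis hm : bilinear_map m.

Lemma mDl x y z : m (x + y) z = m x z + m y z.
Proof. by have := (hm.1 1 x y z); rewrite !scale1r. Qed.
Lemma mDr x y z : m x (y + z) = m x y + m x z.
Proof. by have := (hm.2 1 x y z); rewrite !scale1r. Qed.
Lemma mZl a x z : m (a *: x) z = a *: m x z.
Proof.
have := (hm.1 a x 0 z); rewrite !addr0 => ->.
have h0 : m 0 z = 0 by apply/(addrI (m 0 z)); rewrite -mDl !addr0.
by rewrite h0 addr0.
Qed.
Lemma mZr a x z : m x (a *: z) = a *: m x z.
Proof.
have := (hm.2 a x z 0); rewrite !addr0 => ->.
have h0 : m x 0 = 0 by apply/(addrI (m x 0)); rewrite -mDr !addr0.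
by rewrite h0 addr0.
Qed.
Lemma mNl x z : m (- x) z = - m x z.
Proof. by rewrite -scaleN1r mZl scaleN1r. Qed.
Lemma mNr x z : m x (- z) = - m x z.
Proof. by rewrite -scaleN1r mZr scaleN1r. Qed.
Lemma mBl x y z : m (x - y) z = m x z - m y z.
Proof. by rewrite mDl mNl. Qed.
Lemma mBr x y z : m x (y - z) = m x y - m x z.
Proof. by rewrite mDr mNr. Qed.
End Helpers.
Arguments mDl {F V W m} hm.
Arguments mDr {F V W m} hm.
Arguments mZl {F V W m} hm.
Arguments mZr {F V W m} hm.
Arguments mNl {F V W m} hm.
Arguments mNr {F V W m} hm.
Arguments mBl {F V W m} hm.
Arguments mBr {F V W m} hm.

Lemma z1 (V : zmodType) (u p q r s : V) : (u + p - (u + q)) - (r - s) = (p + s) - (q + r).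
Proof. by rewrite opprD addrACA subrr add0r opprB opprD addrACA addrC. Qed.
Lemma z2 (V : zmodType) (a b c d : V) : (a + b) - (c + d) = (a - c) + (b - d).
Proof. by rewrite opprD addrACA. Qed.
Lemma z3 (V : zmodType) (u1 u2 u3 : V) : (u1 - u2) + (u2 - u3) + (u3 - u1) = 0.
Proof. by rewrite subrKA subrKA subrr. Qed.

Theorem proposition3p24 (F : fieldType) (V : vectType F)
  (charF0 : [pchar F] =i pred0)
  (mul : V -> V -> V) (P Q : {linear V -> V})
  (hA : comm_assoc_algebra mul) (hPQ : admissible_pair mul P Q) :
  let br := fun x y => mul (Q x) y - mul x (Q y) in
  [/\ (forall x y, mul (Q x) y - mul x (Q y) = mul (P x) y - mul x (P y)),
      lie_bracket br &
      (forall B : V -> V -> F^o, sym_bilin_form B -> mul_invariant_form mul B ->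
         comm_2cocycle br B)].
Proof.
case: hA => hm C A br.
have part1 : forall x y, mul (Q x) y - mul x (Q y) = mul (P x) y - mul x (P y).
  move=> x y.
  have e : mul (Q x) y + mul x (P y) = mul x (Q y) + mul (P x) y.
    by rewrite -hPQ C hPQ (C (Q y)) (C y).
  rewrite -[mul (Q x) y](addrK (mul x (P y))) e.
  by rewrite [mul x (Q y) + _]addrC addrAC addrK.
have brbil : bilinear_map br.
  split=> a x y z; rewrite /br.
    rewrite linearP /= (mDl hm) (mZl hm) (mDl hm) (mZl hm) scalerBr.
    by rewrite opprD addrACA.
  rewrite linearP /= (mDr hm) (mZr hm) (mDr hm) (mZr hm) scalerBr.
  by rewrite opprD addrACA.
have cyc : forall x y z, br (br x y) z =
    (mul (P (Q x)) (mul y z) + mul x (mul (Q y) (Q z)))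
  - (mul (P (Q y)) (mul z x) + mul y (mul (Q z) (Q x))).
  move=> x y z; rewrite /br linearB /= (C (Q x) y) hPQ hPQ (C (Q y) (Q x)).
  rewrite !(mBl hm) !(mDl hm) !A.
  have e1 : mul y (mul (P (Q x)) z) = mul (P (Q x)) (mul y z) by rewrite -A (C y) A.
  have e2 : mul x (mul (P (Q y)) z) = mul (P (Q y)) (mul z x) by rewrite -A (C x) A (C x).
  have e3 : mul y (mul (Q x) (Q z)) = mul y (mul (Q z) (Q x)) by rewrite (C (Q x)).
  by rewrite z1 e1 e2 e3 [X in _ - X]addrC.
split=> //.
  split=> // [x|x y z]; first by rewrite /br C subrr.
  by rewrite !cyc z3.
move=> B hB hinv; split=> // x y z.
have bl : forall x y z, B (br x y) z = B (Q x) (mul y z) - B (Q y) (mul z x).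
  move=> u v w; rewrite /br (mBl hB.1) !hinv; congr (_ - _).
  by rewrite hB.2 hinv.
by rewrite !bl; apply: z3.
Qed.
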